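(* Let $p$ be a hyperbolic polynomial of degree $d$ on $\mathbb{R}^n$, and suppose an evaluation oracle for $p$ is given which returns $p(z)$ for any $z\in\mathbb{C}^n$ in time $\mathcal{T}_O$. Then for any $x\in\mathbb{R}^n$ (with $p(x)\neq0$) and any $w\in\mathbb{R}^n$, the vector $\nabla^2(-\ln p(x))\,w$ can be computed in $O(nd^2\mathcal{T}_O)$ time.
   Context: A hyperbolic polynomial is a real homogeneous polynomial $p$ for which there is a direction $e$ such that $t\mapsto p(te-x)$ has only real roots for all $x\in\mathbb{R}^n$. *)

(* Defs.v *)
From HB Require Import structures.
From mathcomp Require Import all_boot all_order all_algebra.
From mathcomp Require Import mpoly.
From mathcomp Require Import complex.
Set Implicit Arguments. Unset Strict Implicit. Unset Printing Implicit Defensive.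
Import Order.TTheory GRing.Theory Num.Theory.
Local Open Scope ring_scope.

Definition mpolyC (R : rcfType) (n : nat) (p : {mpoly R[n]}) : {mpoly R[i][n]} :=
  map_mpoly (real_complex R) p.

Definition cevalp (R : rcfType) (n : nat) (p : {mpoly R[n]}) (z : 'I_n -> R[i]) : R[i] :=
  (mpolyC p).@[z].

Definition hyperbolic (R : rcfType) (n d : nat) (p : {mpoly R[n]}) : Prop :=
  p \is d.-homog /\
  exists e : 'I_n -> R, forall (x : 'I_n -> R) (t : R[i]),
    cevalp p (fun i => t * (real_complex R (e i)) - (real_complex R (x i))) = 0 -> Im t = 0.

Definition hess_neglog (R : rcfType) (n : nat) (p : {mpoly R[n]})
  (x : 'I_n -> R) (i j : 'I_n) : R :=
  (p^`M(i)).@[x] * (p^`M(j)).@[x] / (p.@[x]) ^+ 2 - ((p^`M(i))^`M(j)).@[x] / p.@[x].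

Definition hess_neglog_mul (R : rcfType) (n : nat) (p : {mpoly R[n]})
  (x w : 'I_n -> R) (i : 'I_n) : R :=
  \sum_(j < n) hess_neglog p x i j * w j.

(* Oracle model of computation (straight-line algebraic programs over C *)
(* with an evaluation oracle).  Registers hold complex numbers.  The    *)
(* initial registers are x_0..x_{n-1}, w_0..w_{n-1} (embedded in C).   *)
(* Each instruction appends one register.  References to registers are  *)
(* natural-number indices; out-of-range references read 0.             *)
Inductive instr (C : Type) : Type :=
  | ICst of C
  | IAdd of nat & nat
  | ISub of nat & nat
  | IMul of nat & nat
  | IDiv of nat & nat         (* mathcomp division; x / 0 = 0 *)
  | IOracle of seq nat.       (* oracle call p(z), z_k = register (nth k) *)

Record program (C : Type) : Type := Program {
  instrs : seq (instr C);
  outputs : seq nat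
}.

Section Semantics.
Variables (R : rcfType) (n : nat) (oracle : ('I_n -> R[i]) -> R[i]).

Definition exec_instr (env : seq R[i]) (c : instr R[i]) : R[i] :=
  let rd k := nth 0 env k in
  match c with
  | ICst a => a
  | IAdd a b => rd a + rd b
  | ISub a b => rd a - rd b
  | IMul a b => rd a * rd b
  | IDiv a b => rd a / rd b
  | IOracle s => oracle (fun k : 'I_n => rd (nth 0%N s k))
  end.

Definition run_instrs (env : seq R[i]) (cs : seq (instr R[i])) : seq R[i] :=
  foldl (fun e c => rcons e (exec_instr e c)) env cs.

Definition run (P : program R[i]) (x w : 'I_n -> R) (k : 'I_n) : R[i] :=
  let env0 := [seq (real_complex R (x j)) | j <- enum 'I_n] ++ [seq (real_complex R (w j)) | j <- enum 'I_n] in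
  let env := run_instrs env0 (instrs P) in
  nth 0 env (nth 0%N (outputs P) k).
End Semantics.

Definition instr_cost (C : Type) (TO : nat) (c : instr C) : nat :=
  match c with IOracle _ => TO | _ => 1%N end.

Definition cost (C : Type) (TO : nat) (P : program C) : nat :=
  \sum_(c <- instrs P) instr_cost TO c.

(* Main.v *)
Require Import Defs.
From HB Require Import structures.
From mathcomp Require Import all_boot all_order all_algebra.
From mathcomp Require Import mpoly.
From mathcomp Require Import complex.
From mathcomp Require Import qpoly.
From mathcomp Require Import zify ring.
From Stdlib Require Import FunctionalExtensionality.
Import Order.TTheory GRing.Theory Num.Theory.
Local Open Scope ring_scope.

Set Implicit Arguments. Unset Strict Implicit. Unset Printing Implicit Defensive.

Lemma mnm_subxx (n : nat) (m : 'X_{1..n}) : (m - m = 0)%MM.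
Proof. by apply/mnmP => k; rewrite mnmBE mnm0E subnn. Qed.

Section CoreS.
Variables (K : numFieldType) (n : nat).

Definition phi (y u : 'I_n -> K) (p : {mpoly K[n]}) : {poly K} :=
  mmap (@polyC K) (fun j => (y j)%:P + (u j)%:P * 'X) p.

Lemma phi_horner y u p t : (phi y u p).[t] = p.@[fun j => y j + u j * t].
Proof.
rewrite /phi /mmap mevalE horner_sum; apply: eq_bigr => m _.
rewrite hornerM hornerC /mmap1 horner_prod; congr (_ * _).
by apply: eq_bigr => i _; rewrite horner_exp !hornerE.
Qed.

Lemma phi_size y u p d : (forall m, m \in msupp p -> (mdeg m <= d)%N) ->
  (size (phi y u p) <= d.+1)%N.
Proof.
move=> Hd; rewrite /phi /mmap.
rewrite big_seq; apply: (big_ind (fun q : {poly K} => size q <= d.+1)%N).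
- by rewrite size_poly0.
- move=> a b Ha Hb; apply: leq_trans (size_polyD _ _) _; by rewrite geq_max Ha Hb.
move=> m /Hd Hm.
apply: leq_trans (size_mul_leq _ _) _.
have H1 : (size (p@_m)%:P <= 1)%N by apply: size_polyC_leq1.
suff H2 : (size (mmap1 (fun j => ((y j)%:P + (u j)%:P * 'X)%R) m) <= d.+1)%N.
  move: H1 H2; move: (size _) => a; move: (size _) => b; lia.
rewrite /mmap1.
have -> : d.+1 = (d - mdeg m + (\sum_i m i).+1)%N by rewrite -mdegE; lia.
have Hgen : (size (\prod_(i < n) ((y i)%:P + (u i)%:P * 'X) ^+ m i)%R <= (\sum_i m i).+1)%N.

  apply: (big_ind2 (fun (q : {poly K}) (s : nat) => size q <= s.+1)%N).
  - by rewrite size_poly1.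
  - move=> a1 s1 a2 s2 H1' H2'; apply: leq_trans (size_mul_leq _ _) _.
    by move: H1' H2'; case: (size a1) => [|k1]; case: (size a2) => [|k2] /=; lia.
  move=> i _; apply: leq_trans (size_exp_leq _ _) _.
  have Hs : (size ((y i)%:P + (u i)%:P * 'X)%R <= 2)%N.
    apply: leq_trans (size_polyD _ _) _; rewrite geq_max.
    rewrite (leq_trans (size_polyC_leq1 _)) //=.
    by apply: leq_trans (size_mul_leq _ _) _; rewrite size_polyX;
      case: (size _) (size_polyC_leq1 (u i)) => [|[]].
  rewrite ltnS; case: (size _) Hs => [|[|[]]] //= _; by rewrite ?mul0n ?mul1n.
apply: leq_trans Hgen _; lia.
Qed.

Lemma phi_deriv y u p :
  (phi y u p)^`() = \sum_(j < n) (u j)%:P * phi y u (p^`M(j)).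
Proof.
pose S (p : {mpoly K[n]}) := (phi y u p)^`() = \sum_(j < n) (u j)%:P * phi y u (p^`M(j)).
have HD : forall p q, S p -> S q -> S (p + q).
  move=> p1 q1; rewrite /S => h1 h2.
  rewrite /phi raddfD /= derivD -/(phi _ _ _) -/(phi _ _ _) h1 h2 -big_split /=.
  by apply: eq_bigr => j _; rewrite mderivD /phi raddfD /= mulrDr.
have HM : forall p q, S p -> S q -> S (p * q).
  move=> p1 q1; rewrite /S => h1 h2.
  rewrite /phi rmorphM /= derivM -/(phi _ _ _) -/(phi _ _ _) h1 h2.
  rewrite mulr_suml mulr_sumr -big_split /=.
  apply: eq_bigr => j _; rewrite mderivM /phi raddfD /= !rmorphM /=.
  by rewrite mulrDr !mulrA [_ * mmap _ _ p1]mulrC.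
have HC : forall c, S c%:MP.
  move=> c; rewrite /S /phi mmapC derivC big1 // => j _.
  by rewrite mderivC raddf0 mulr0.
have HX : forall i, S 'X_i.
  move=> i; rewrite /S /phi.
  rewrite mmapX mmap1U !derivE /= (bigD1 i) //= big1 ?addr0.
    rewrite mderivX mmapZ mmapX mnm1E eqxx mnm_subxx mmap11 /=.
    by rewrite add0r polyC1 !mulr1.
  move=> j nji; rewrite mderivX mmapZ mnm1E /=.
  by rewrite eq_sym (negbTE nji) /= polyC0 mul0r mulr0.
have HXm : forall m, S 'X_[m].
  move=> m; rewrite mpolyXE_id; apply: big_ind => //.
  - by rewrite -mpolyC1; apply: HC.
  move=> i _; elim: (m i) => [|k IH]; first by rewrite expr0 -mpolyC1; apply: HC.
  by rewrite exprS; apply: HM.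
elim/mpolyind: p => [|c m p _ _ IH].
  by rewrite -mpolyC0; apply: HC.
apply: HD => //; rewrite -mul_mpolyC; apply: HM => //.
Qed.

Lemma interp (N : nat) : (0 < N)%N -> exists a : 'I_N -> K,
  forall Q : {poly K}, (size Q <= N)%N -> Q`_1 = \sum_(l < N) a l * Q.[(l:nat)%:R].
Proof.
move=> N0.
have xinj : injective (fun k : nat => (k%:R : K)).
  by move=> a b /eqP; rewrite eqr_nat => /eqP.
exists (fun l => (tnth (N.-lagrange (fun k : nat => (k%:R : K))) l : {poly K})`_1).
move=> Q sQ; rewrite {1}(lagrange_gen N0 xinj sQ) coef_sum.
by apply: eq_bigr => l _; rewrite coefCM mulrC.
Qed.

Lemma core d (a : 'I_d.+1 -> K)
  (Ha : forall Q : {poly K}, (size Q <= d.+1)%N -> Q`_1 = \sum_(l < d.+1) a l * Q.[(l:nat)%:R])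
  (p : {mpoly K[n]}) (y u : 'I_n -> K) :
  (forall m, m \in msupp p -> (mdeg m <= d)%N) ->
  \sum_(l < d.+1) a l * p.@[fun j => y j + u j * (l:nat)%:R] =
  \sum_(j < n) u j * (p^`M(j)).@[y].
Proof.
move=> Hd.
transitivity ((phi y u p)`_1).
  rewrite (Ha _ (phi_size y u Hd)); apply: eq_bigr => l _; by rewrite phi_horner.
have := congr1 (fun q => q.[0]) (phi_deriv y u p).
rewrite horner_coef0 coef_deriv mulr1n => ->.
rewrite horner_sum; apply: eq_bigr => j _.
rewrite hornerM hornerC phi_horner; congr (_ * _); apply: meval_eq => k.
by rewrite mulr0 addr0.
Qed.

End CoreS.

Section Sem.
Variables (R : rcfType) (n : nat) (oracle : ('I_n -> R[i]) -> R[i]).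
Local Notation C := R[i].

Definition okI (s : nat) (c : instr C) : bool :=
  match c with
  | ICst _ => true
  | IAdd a b | ISub a b | IMul a b | IDiv a b => (a < s)%N && (b < s)%N
  | IOracle l => (0 < s)%N && all (fun a => a < s)%N l
  end.

Lemma nth_catl (E W : seq C) a : (a < size E)%N -> nth 0 (E ++ W) a = nth 0 E a.
Proof. by move=> h; rewrite nth_cat h. Qed.

Lemma exec_cat (E W : seq C) c : okI (size E) c ->
  exec_instr oracle (E ++ W) c = exec_instr oracle E c.
Proof.
case: c => [a|a b|a b|a b|a b|l] /=; try by move=> /andP[ha hb]; rewrite !nth_catl.
  by [].
move=> /andP[h0 /allP hl]; congr oracle; apply: functional_extensionality => k.
rewrite nth_catl //; case: (ltnP k (size l)) => hk.
  by apply: hl; apply: mem_nth.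
by rewrite nth_default.
Qed.

Lemma run_block (E : seq C) cs : all (okI (size E)) cs ->
  run_instrs oracle E cs = E ++ map (exec_instr oracle E) cs.
Proof.
move=> hall.
suff: forall pre, run_instrs oracle (E ++ pre) cs = E ++ pre ++ map (exec_instr oracle E) cs.
  by move=> /(_ [::]); rewrite cats0.
elim: cs hall => [|c cs IH] /= hall pre; first by rewrite cats0.
move: hall => /andP[hc hcs].
rewrite /run_instrs /= -/(run_instrs _ _ _) -cats1 -catA exec_cat // IH //.
by rewrite -!catA.
Qed.

Lemma run_cat (E : seq C) cs1 cs2 :
  run_instrs oracle E (cs1 ++ cs2) = run_instrs oracle (run_instrs oracle E cs1) cs2.
Proof. by rewrite /run_instrs foldl_cat. Qed.

Lemma nth_block (E : seq C) (g : nat -> instr C) J j : (j < J)%N ->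
  nth 0 (E ++ map (exec_instr oracle E) (mkseq g J)) (size E + j) = exec_instr oracle E (g j).
Proof.
move=> hj; rewrite nth_cat ltnNge leq_addr /= addKn.
by rewrite (nth_map (ICst 0)) ?size_mkseq // nth_mkseq.
Qed.

Lemma all_mkseq_ok s (g : nat -> instr C) J :
  (forall j, (j < J)%N -> okI s (g j)) -> all (okI s) (mkseq g J).
Proof. move=> h; rewrite /mkseq all_map; apply/allP => j; rewrite mem_iota => /andP[_ hj]; exact: h. Qed.


Definition wsb (s J : nat) (src : nat -> nat -> nat) (A : nat -> nat) (Z : nat) (m : nat) : seq (instr C) :=
  mkseq (fun j => IMul C (A m) (src m j)) J ++
  mkseq (fun j => IAdd C (if m == 0%N then Z else (s + 2 * J * m.-1 + J + j)%N) (s + 2 * J * m + j)%N) J.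

Fixpoint ws (s J : nat) (src : nat -> nat -> nat) (A : nat -> nat) (Z : nat) (m : nat) : seq (instr C) :=
  if m is m'.+1 then ws s J src A Z m' ++ wsb s J src A Z m' else [::].

Lemma size_ws s J src A Z m : size (ws s J src A Z m) = (2 * J * m)%N.
Proof.
elim: m => [|m IH] /=; first by rewrite muln0.
by rewrite size_cat IH size_cat !size_mkseq; lia.
Qed.

Lemma ws_spec (E : seq C) J src A Z m :
  (forall l j, (l < m)%N -> (j < J)%N -> (src l j < size E)%N) ->
  (forall l, (l < m)%N -> (A l < size E)%N) ->
  (Z < size E)%N -> nth 0 E Z = 0 ->
  exists W, run_instrs oracle E (ws (size E) J src A Z m) = E ++ W /\
    size W = (2 * J * m)%N /\
    (forall j, (j < J)%N -> (0 < m)%N ->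
       nth 0 (E ++ W) (size E + 2 * J * m.-1 + J + j)%N =
       \sum_(l < m) nth 0 E (A l) * nth 0 E (src l j)).
Proof.
move=> Hsrc HA HZ HZ0.
elim: m Hsrc HA => [|m IH] Hsrc HA.
  by exists [::]; rewrite cats0 muln0.
have [W [HW1 [HW2 HW3]]] := IH (fun l j hl => Hsrc l j (ltnW hl)) (fun l hl => HA l (ltnW hl)).
set s := size E.
have okP : all (okI (size (E ++ W))) (mkseq (fun j => IMul C (A m) (src m j)) J).
  apply: all_mkseq_ok => j hj /=; rewrite size_cat HW2.
  by apply/andP; split; [move: (HA m (ltnSn m))|move: (Hsrc m j (ltnSn m) hj)]; rewrite -/s; lia.
set P := mkseq (fun j => IMul C (A m) (src m j)) J.
set Sb := mkseq (fun j => IAdd C (if m == 0%N then Z else (s + 2 * J * m.-1 + J + j)%N) (s + 2 * J * m + j)%N) J.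
have okS : all (okI (size ((E ++ W) ++ map (exec_instr oracle (E ++ W)) P))) Sb.
  apply: all_mkseq_ok => j hj /=; rewrite !size_cat HW2 size_map size_mkseq.
  apply/andP; split; last by lia.
  case: eqP => [_|hm]; [rewrite -/s in HZ; lia|]. by case: m {IH HW1 HW2 HW3 okP P Sb HA Hsrc} hm => [|m'] // _; rewrite /s /= mulnS; lia.
exists (W ++ map (exec_instr oracle (E ++ W)) P ++
        map (exec_instr oracle ((E ++ W) ++ map (exec_instr oracle (E ++ W)) P)) Sb).
rewrite /= run_cat HW1 /wsb run_cat -/P -/Sb (run_block okP) (run_block okS).
split; first by rewrite -!catA.
split; first by rewrite !size_cat HW2 !size_map size_iota mulnS; lia.
move=> j hj _ /=.
have -> : (s + 2 * J * m + J + j = size ((E ++ W) ++ map (exec_instr oracle (E ++ W)) P) + j)%N.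
  by rewrite !size_cat HW2 size_map size_mkseq; lia.
rewrite !catA /Sb nth_block //= big_ord_recr /=.
have hP : forall q, (q < size (E ++ W))%N ->
  nth 0 ((E ++ W) ++ map (exec_instr oracle (E ++ W)) P) q = nth 0 (E ++ W) q.
  by move=> q hq; rewrite nth_catl.
have hA := HA m (ltnSn m); have hs := Hsrc m j (ltnSn m) hj.
have -> : nth 0 ((E ++ W) ++ map (exec_instr oracle (E ++ W)) P) (s + 2 * J * m + j)%N =
   nth 0 E (A m) * nth 0 E (src m j).
  have -> : (s + 2 * J * m + j = size (E ++ W) + j)%N by rewrite size_cat HW2; lia.
  by rewrite /P nth_block //= !nth_catl.
congr (_ + _).
case: eqP => [m0|hm].
  by rewrite hP ?nth_catl ?size_cat; [rewrite m0 big_ord0|lia|lia].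
have hlt : (s + 2 * J * m.-1 + J + j < s + 2 * J * m)%N.
  by move: hj hm; clear; case: m => [|m'] //= hj _; rewrite mulnS; lia.
rewrite hP; last by rewrite size_cat HW2.
by rewrite HW3 //; lia.
Qed.

End Sem.

Lemma deg_deriv (K : nzRingType) (n d : nat) (p : {mpoly K[n]}) (i : 'I_n) :
  (forall m, m \in msupp p -> (mdeg m <= d)%N) ->
  forall m, m \in msupp (p^`M(i)) -> (mdeg m <= d)%N.
Proof.
move=> Hd m; rewrite mcoeff_msupp mcoeff_mderiv => hm.
have : (m + U_(i))%MM \in msupp p.
  by rewrite mcoeff_msupp; apply: contraNN hm => /eqP ->; rewrite mul0rn.
by move=> /Hd; rewrite mdegD mdeg1; lia.
Qed.

Section Glue.
Variables (R : rcfType) (n : nat).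

Lemma mderiv_mpolyC (p : {mpoly R[n]}) i : (Defs.mpolyC p)^`M(i) = Defs.mpolyC (p^`M(i)).
Proof.
apply/mpolyP => m; rewrite /Defs.mpolyC mcoeff_mderiv !mcoeff_map_mpoly mcoeff_mderiv.
by rewrite [RHS]raddfMn.
Qed.

Lemma meval_mpolyC (p : {mpoly R[n]}) (x : 'I_n -> R) :
  (Defs.mpolyC p).@[fun j => real_complex R (x j)] = real_complex R (p.@[x]).
Proof.
rewrite /Defs.mpolyC !mevalE (perm_big _ (msupp_map_mpoly _ (@complexI R))) /=.
rewrite rmorph_sum; apply: eq_bigr => m _.
rewrite mcoeff_map_mpoly rmorphM rmorph_prod; congr (_ * _).
by apply: eq_bigr => j _; rewrite rmorphXn.
Qed.

Lemma deg_mpolyC (p : {mpoly R[n]}) d : p \is d.-homog ->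
  forall m, m \in msupp (Defs.mpolyC p) -> (mdeg m <= d)%N.
Proof.
move=> /dhomogP h m; rewrite (perm_mem (msupp_map_mpoly _ (@complexI R))) => /h ->.
by [].
Qed.
End Glue.

Section Prog.
Variables (R : rcfType) (n d : nat) (a : 'I_d.+1 -> R[i]).
Local Notation C := R[i].
Local Notation N := d.+1.

Definition an (l : nat) : C := a (inord l).

Definition s0 := (2 * n)%N.
Definition Tr l := (s0 + l)%N.
Definition Aw l := (s0 + N + l)%N.
Definition Zr := (s0 + 2 * N)%N.
Definition s1 := (s0 + 2 * N + 1)%N.
Definition s2 := (s1 + N * n)%N.
Definition s3 := (s2 + N * n)%N.
Definition s4 := (s3 + N * n * N)%N.
Definition s5 := (s4 + N * n * N)%N.
Definition res1 r := (s5 + 2 * (N * n) * N.-1 + N * n + r)%N.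
Definition s6 := (s5 + 2 * (N * n) * N)%N.
Definition res2 i := (s6 + 2 * n * N.-1 + n + i)%N.
Definition s7 := (s6 + 2 * n * N)%N.
Definition resD := (s7 + 2 * 1 * N.-1 + 1 + 0)%N.
Definition s8 := (s7 + 2 * 1 * N)%N.
Definition s9 := (s8 + 1)%N.
Definition s10 := (s9 + n)%N.
Definition s11 := (s10 + n)%N.
Definition s12 := (s11 + n)%N.

Definition B0a : seq (instr C) := mkseq (fun l => ICst (l%:R : C)) N.
Definition B0b : seq (instr C) := mkseq (fun l => ICst (an l)) N.
Definition B0c : seq (instr C) := mkseq (fun _ => ICst (0 : C)) 1.
Definition B1 : seq (instr C) := mkseq (fun q => IMul C (n + q %% n)%N (Tr (q %/ n)%N)) (N * n).
Definition B2 : seq (instr C) := mkseq (fun q => IAdd C (q %% n)%N (s1 + q)) (N * n).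
Definition B3 : seq (instr C) := mkseq (fun q => IAdd C (s2 + q %/ N)%N (Tr (q %% N)%N)) (N * n * N).
Definition B4 : seq (instr C) :=
  mkseq (fun q => IOracle C (mkseq (fun j => if j == ((q %/ N) %% n)%N then (s3 + q)%N
                                         else (s2 + (q %/ N) %/ n * n + j)%N) n)) (N * n * N).
Definition W1 : seq (instr C) := ws R s5 (N * n) (fun l r => s4 + r * N + l)%N Aw Zr N.
Definition W2 : seq (instr C) := ws R s6 n (fun k i => res1 (k * n + i)) Aw Zr N.
Definition W3 : seq (instr C) := ws R s7 1 (fun k _ => s4 + k * n * N)%N Aw Zr N.
Definition F1 : seq (instr C) := mkseq (fun _ => IMul C s4 s4) 1.
Definition F2 : seq (instr C) := mkseq (fun i => IMul C (res1 i) resD) n.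
Definition F3 : seq (instr C) := mkseq (fun i => IDiv C (s9 + i) s8) n.
Definition F4 : seq (instr C) := mkseq (fun i => IDiv C (res2 i) s4) n.
Definition F5 : seq (instr C) := mkseq (fun i => ISub C (s10 + i) (s11 + i)) n.

Definition prog : program C :=
  Program (B0a ++ B0b ++ B0c ++ B1 ++ B2 ++ B3 ++ B4 ++ W1 ++ W2 ++ W3 ++ F1 ++ F2 ++ F3 ++ F4 ++ F5)
          (mkseq (fun i => s12 + i)%N n).

Lemma size_prog : size (instrs prog) = (s12 + n - 2 * n)%N.
Proof.
rewrite /prog; cbn [instrs]; rewrite !size_cat /B0a /B0b /B0c /B1 /B2 /B3 /B4 /F1 /F2 /F3 /F4 /F5 !size_mkseq /W1 /W2 /W3 !size_ws.
rewrite /s12 /s11 /s10 /s9 /s8 /s7 /s6 /s5 /s4 /s3 /s2 /s1 /s0; lia.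
Qed.


Lemma dm (r l M : nat) : (l < M)%N -> ((r * M + l) %/ M = r)%N /\ ((r * M + l) %% M = l)%N.
Proof.
move=> hl; have M0 : (0 < M)%N by lia.
by rewrite divnMDl // divn_small // addn0 modnMDl modn_small.
Qed.

Lemma lt_mix (k j m M : nat) : (k < M)%N -> (j < m)%N -> (k * m + j < M * m)%N.
Proof.
move=> hk hj; apply: (@leq_trans (k.+1 * m)); first by rewrite mulSn; lia.
by rewrite leq_mul2r hk orbT.
Qed.

Lemma alg_id (F : fieldType) (m : nat) (g P : F) (gj hj ww : 'I_m -> F) :
  \sum_(j < m) (g * gj j / P ^+ 2 - hj j / P) * ww j =
  g * (\sum_(j < m) ww j * gj j) / (P * P) - (\sum_(j < m) ww j * hj j) / P.
Proof.
rewrite mulr_sumr !mulr_suml -sumrB; apply: eq_bigr => j _.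
rewrite expr2; move: (P * P)^-1 P^-1 => u v; ring.
Qed.

Lemma cplx_id (g D H P : R) :
  real_complex R (g * D / (P * P) - H / P) =
  real_complex R g * real_complex R D / (real_complex R P * real_complex R P) -
  real_complex R H / real_complex R P.
Proof. by rewrite rmorphB !rmorphM !fmorphV !rmorphM. Qed.

Lemma sum_C (f g : 'I_n -> R) :
  real_complex R (\sum_(j < n) f j * g j) = \sum_(j < n) real_complex R (f j) * real_complex R (g j).
Proof. by rewrite rmorph_sum; apply: eq_bigr => j _; rewrite rmorphM. Qed.

Section Correct.
Variables (p : {mpoly R[n]}) (x w : 'I_n -> R).
Hypothesis n0 : (0 < n)%N.
Hypothesis Ha : forall Q : {poly C}, (size Q <= N)%N -> Q`_1 = \sum_(l < N) a l * Q.[(l:nat)%:R].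
Hypothesis Hh : p \is d.-homog.

Local Notation pC := (Defs.mpolyC p).
Local Notation o := (cevalp p).
Definition x' j := real_complex R (x j).
Definition w' j := real_complex R (w j).
Definition yk (k : nat) := fun j => x' j + w' j * (k%:R : C).
Definition env0 : seq C := [seq (real_complex R (x j)) | j <- enum 'I_n] ++ [seq (real_complex R (w j)) | j <- enum 'I_n].

Lemma ext_fact (E V : seq C) q v : (forall t, nth 0 (E ++ t) q = v) -> forall t, nth 0 ((E ++ V) ++ t) q = v.
Proof. by move=> h t; rewrite -catA. Qed.

Ltac up F := first [ exact: F | apply: ext_fact; up F ].

Lemma new_fact (E : seq C) g J j : (j < J)%N ->
  forall t, nth 0 ((E ++ map (exec_instr o E) (mkseq g J)) ++ t) (size E + j) = exec_instr o E (g j).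
Proof.
move=> hj t; rewrite nth_catl ?nth_block // size_cat size_map size_mkseq; lia.
Qed.

Lemma fact0 (E : seq C) q v : (forall t, nth 0 (E ++ t) q = v) -> nth 0 E q = v.
Proof. by move=> /(_ [::]); rewrite cats0. Qed.

Lemma size_env0 : size env0 = s0.
Proof. rewrite size_cat !size_map -enumT size_enum_ord /s0; lia. Qed.

Lemma env0_x (j : 'I_n) t : nth 0 (env0 ++ t) j = x' j.
Proof.
rewrite nth_catl ?size_env0 /s0; last by move: (ltn_ord j); lia.
rewrite -?enumT nth_cat size_map size_enum_ord ltn_ord (nth_map j) ?size_enum_ord //.
by rewrite nth_ord_enum.
Qed.

Lemma env0_w (j : 'I_n) t : nth 0 (env0 ++ t) (n + j) = w' j.
Proof.
rewrite nth_catl ?size_env0 /s0; last by move: (ltn_ord j); lia.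
rewrite -?enumT nth_cat size_map size_enum_ord ltnNge leq_addr /= addKn.
by rewrite (nth_map j) ?size_enum_ord // nth_ord_enum.
Qed.


Lemma delta_sum (f : 'I_n -> C) (i : 'I_n) : \sum_(j < n) (i == j)%:R * f j = f i.
Proof.
rewrite (bigD1 i) //= eqxx mul1r big1 ?addr0 // => j nji.
by rewrite eq_sym (negbTE nji) mul0r.
Qed.

Lemma Hdeg : forall m, m \in msupp pC -> (mdeg m <= d)%N.
Proof. exact: deg_mpolyC Hh. Qed.

Lemma main_correct (kk : 'I_n) :
  run o prog x w kk = real_complex R (hess_neglog_mul p x w kk).
Proof.
have N0 : (0 < N)%N by [].
have eI : instrs prog = B0a ++ B0b ++ B0c ++ B1 ++ B2 ++ B3 ++ B4 ++ W1 ++ W2 ++ W3 ++ F1 ++ F2 ++ F3 ++ F4 ++ F5 by [].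
have eO : outputs prog = mkseq (fun i => s12 + i)%N n by [].
rewrite /run eI eO.
rewrite nth_mkseq //.
rewrite -/env0; do 14 rewrite run_cat.
have ok : all (okI (size env0)) B0a by apply: all_mkseq_ok.
rewrite (run_block o ok); set E1 := env0 ++ _.
have sE1 : size E1 = (s0 + N)%N by rewrite size_cat size_map size_mkseq size_env0.
have fT : forall l, (l < N)%N -> forall t, nth 0 (E1 ++ t) (Tr l) = (l%:R : C).
  by move=> l hl t; rewrite /Tr -size_env0 /E1 /B0a new_fact.
have {}ok : all (okI (size E1)) B0b by apply: all_mkseq_ok.
rewrite (run_block o ok); set E2 := E1 ++ _.
have sE2 : size E2 = (s0 + 2 * N)%N by rewrite size_cat size_map size_mkseq sE1; lia.
have fA : forall l, (l < N)%N -> forall t, nth 0 (E2 ++ t) (Aw l) = an l.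
  by move=> l hl t; rewrite /Aw -sE1 /E2 /B0b new_fact.
have {}ok : all (okI (size E2)) B0c by apply: all_mkseq_ok.
rewrite (run_block o ok); set E3 := E2 ++ _.
have sE3 : size E3 = s1 by rewrite size_cat size_map size_mkseq sE2 /s1; lia.
have fZ : forall t, nth 0 (E3 ++ t) Zr = 0.
  by move=> t; rewrite /Zr -[(s0 + 2 * N)%N]addn0 -sE2 /E3 /B0c new_fact.
have fT3 l (hl : (l < N)%N) t : nth 0 (E3 ++ t) (Tr l) = (l%:R : C).
  by move: t; do 2 apply: ext_fact; apply: fT.
have fA3 l (hl : (l < N)%N) t : nth 0 (E3 ++ t) (Aw l) = an l.
  by move: t; apply: ext_fact; apply: fA.
have fx3 (j : 'I_n) t : nth 0 (E3 ++ t) j = x' j.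
  by move: t; do 3 apply: ext_fact; apply: env0_x.
have fw3 (j : 'I_n) t : nth 0 (E3 ++ t) (n + j) = w' j.
  by move: t; do 3 apply: ext_fact; apply: env0_w.
have {}ok : all (okI (size E3)) B1.
  apply: all_mkseq_ok => q hq /=; rewrite sE3 /s1 /Tr /s0.
  have h1 := ltn_pmod q n0; have h2 : (q %/ n < N)%N by rewrite ltn_divLR.
  apply/andP; split; lia.
rewrite (run_block o ok); set E4 := E3 ++ _.
have sE4 : size E4 = s2 by rewrite size_cat size_map size_mkseq sE3.
have f4 (k : nat) (i : 'I_n) (hk : (k < N)%N) t : nth 0 (E4 ++ t) (s1 + (k * n + i)) = w' i * (k%:R : C).
  have [e1 e2] := dm k (ltn_ord i).
  rewrite -sE3 /E4 /B1 new_fact; last exact: lt_mix.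
  by rewrite /= e1 e2 (fact0 (fw3 i)) (fact0 (fT3 _ hk)).

have fx4 (j : 'I_n) t : nth 0 (E4 ++ t) j = x' j by move: t; apply: ext_fact; apply: fx3.
have fT4 l (hl : (l < N)%N) t : nth 0 (E4 ++ t) (Tr l) = (l%:R : C).
  by move: t; apply: ext_fact; apply: fT3.
have {}ok : all (okI (size E4)) B2.
  apply: all_mkseq_ok => q hq /=; rewrite sE4 /s2 /s1 /s0.
  have h1 := ltn_pmod q n0; apply/andP; split; lia.
rewrite (run_block o ok); set E5 := E4 ++ _.
have sE5 : size E5 = s3 by rewrite size_cat size_map size_mkseq sE4.
have f5 (k : nat) (i : 'I_n) (hk : (k < N)%N) t : nth 0 (E5 ++ t) (s2 + (k * n + i)) = yk k i.
  have [e1 e2] := dm k (ltn_ord i).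
  rewrite -sE4 /E5 /B2 new_fact; last exact: lt_mix.
  by rewrite /= e2 (fact0 (fx4 i)) (fact0 (f4 k i hk)).
have fT5 l (hl : (l < N)%N) t : nth 0 (E5 ++ t) (Tr l) = (l%:R : C).
  by move: t; apply: ext_fact; apply: fT4.
have {}ok : all (okI (size E5)) B3.
  apply: all_mkseq_ok => q hq /=; rewrite sE5 /s3 /s2 /s1 /Tr /s0.
  have h1 : (q %% N < N)%N by rewrite ltn_pmod.
  have h2 : (q %/ N < N * n)%N by rewrite ltn_divLR.
  apply/andP; split; lia.
rewrite (run_block o ok); set E6 := E5 ++ _.
have sE6 : size E6 = s4 by rewrite size_cat size_map size_mkseq sE5.
have f6 (k : nat) (i : 'I_n) (l : nat) (hk : (k < N)%N) (hl : (l < N)%N) t :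
    nth 0 (E6 ++ t) (s3 + ((k * n + i) * N + l)) = yk k i + (l%:R : C).
  have [e1 e2] := dm (k * n + i) hl.
  rewrite -sE5 /E6 /B3 new_fact; last by apply: lt_mix => //; apply: lt_mix.
  by rewrite /= e1 e2 (fact0 (f5 k i hk)) (fact0 (fT5 l hl)).
have f56 (k : nat) (i : 'I_n) (hk : (k < N)%N) t : nth 0 (E6 ++ t) (s2 + (k * n + i)) = yk k i.
  by move: t; apply: ext_fact; apply: f5.
have {}ok : all (okI (size E6)) B4.
  apply: all_mkseq_ok => q hq /=; rewrite sE6.
  apply/andP; split; first by rewrite /s4; lia.
  rewrite /mkseq all_map; apply/allP => j; rewrite mem_iota => /andP[_ hj] /=.
  case: ifP => _; first by rewrite /s4; lia.
  have h2 : (q %/ N %/ n < N)%N by rewrite !ltn_divLR.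
  have := lt_mix h2 hj; rewrite /s4 /s3; lia.
rewrite (run_block o ok); set E7 := E6 ++ _.
have sE7 : size E7 = s5 by rewrite size_cat size_map size_mkseq sE6.
have f7 (k : nat) (i : 'I_n) (l : nat) (hk : (k < N)%N) (hl : (l < N)%N) t :
    nth 0 (E7 ++ t) (s4 + ((k * n + i) * N + l)) =
    pC.@[fun j => yk k j + (i == j)%:R * (l%:R : C)].
  have [e1 e2] := dm (k * n + i) hl.
  have [e3 e4] := dm k (ltn_ord i).
  rewrite -sE6 /E7 /B4 new_fact; last by apply: lt_mix => //; apply: lt_mix.
  rewrite /= /cevalp; apply: meval_eq => j /=.
  rewrite nth_mkseq // e1 e3 e4.
  case: eqP => [ji|nji].
    have -> : i = j by apply: val_inj.
    by rewrite (fact0 (f6 k j l hk hl)) eqxx mul1r.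
  have -> : (i == j) = false by apply/negbTE/eqP => h; apply: nji; rewrite h.
  by rewrite -addnA (fact0 (f56 k j hk)) mul0r addr0.

have fA7 l (hl : (l < N)%N) : forall t, nth 0 (E7 ++ t) (Aw l) = an l by up (fA l hl).
have fZ7 : forall t, nth 0 (E7 ++ t) Zr = 0 by up fZ.
pose i0 : 'I_n := Ordinal n0.
have hsrc : forall l r, (l < N)%N -> (r < N * n)%N -> ((fun l r => s4 + r * N + l)%N l r < size E7)%N.
  move=> l r hl hr /=; rewrite sE7 /s5; have := lt_mix hr hl; lia.
have hA : forall l, (l < N)%N -> (Aw l < size E7)%N.
  by move=> l hl; rewrite sE7 /s5 /s4 /s3 /s2 /s1 /Aw /s0; lia.
have hZ : (Zr < size E7)%N by rewrite sE7 /s5 /s4 /s3 /s2 /s1 /Zr /s0; lia.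
have [W [HW1 [HW2 HW3]]] := ws_spec o (J := (N * n)%N) hsrc hA hZ (fact0 fZ7).
have eW1 : W1 = ws R (size E7) (N * n) (fun l r => s4 + r * N + l)%N Aw Zr N by rewrite sE7.
rewrite eW1 HW1; set E8 := E7 ++ W.
have sE8 : size E8 = s6 by rewrite size_cat HW2 sE7.
have f8 (k : nat) (i : 'I_n) (hk : (k < N)%N) t :
    nth 0 (E8 ++ t) (res1 (k * n + i)) = (pC^`M(i)).@[yk k].
  have hr := lt_mix hk (ltn_ord i).
  rewrite nth_catl; last by rewrite sE8 /res1 /s6; lia.
  rewrite /res1 -sE7 HW3 //.
  transitivity (\sum_(l < N) a l * pC.@[fun j => yk k j + (i == j)%:R * ((l : nat)%:R : C)]).
    apply: eq_bigr => l _; rewrite (fact0 (fA7 l (ltn_ord l))) /an inord_val.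
    by rewrite -addnA (fact0 (f7 k i l hk (ltn_ord l))).
  by rewrite (core Ha (yk k) (fun j => (i == j)%:R) Hdeg) delta_sum.

have fA8 l (hl : (l < N)%N) : forall t, nth 0 (E8 ++ t) (Aw l) = an l by up (fA l hl).
have fZ8 : forall t, nth 0 (E8 ++ t) Zr = 0 by up fZ.
have hsrc2 : forall k i, (k < N)%N -> (i < n)%N -> ((fun k i => res1 (k * n + i)) k i < size E8)%N.
  move=> k i hk hi /=; rewrite sE8 /res1 /s6; have := lt_mix hk hi; lia.
have hA2 : forall l, (l < N)%N -> (Aw l < size E8)%N.
  by move=> l hl; rewrite sE8 /s6 /s5 /s4 /s3 /s2 /s1 /Aw /s0; lia.
have hZ2 : (Zr < size E8)%N by rewrite sE8 /s6 /s5 /s4 /s3 /s2 /s1 /Zr /s0; lia.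
have [W' [HW1' [HW2' HW3']]] := ws_spec o (J := n) hsrc2 hA2 hZ2 (fact0 fZ8).
have eW2 : W2 = ws R (size E8) n (fun k i => res1 (k * n + i)) Aw Zr N by rewrite sE8.
rewrite eW2 HW1'; set E9 := E8 ++ W'.
have sE9 : size E9 = s7 by rewrite size_cat HW2' sE8.
have f9 (i : 'I_n) t :
    nth 0 (E9 ++ t) (res2 i) = \sum_(j < n) w' j * ((pC^`M(i))^`M(j)).@[x'].
  rewrite nth_catl; last by rewrite sE9 /res2 /s7; move: (ltn_ord i); lia.
  rewrite /res2 -sE8 HW3' //.
  transitivity (\sum_(k < N) a k * (pC^`M(i)).@[fun j => x' j + w' j * ((k : nat)%:R : C)]).
    apply: eq_bigr => k _; rewrite (fact0 (fA8 k (ltn_ord k))) /an inord_val.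
    by rewrite (fact0 (f8 k i (ltn_ord k))).
  by rewrite (core Ha x' w' (deg_deriv (i := i) Hdeg)).
have f78 (k : nat) (hk : (k < N)%N) : forall t, nth 0 (E9 ++ t) (s4 + k * n * N) = pC.@[yk k].
  have e : (s4 + k * n * N = s4 + ((k * n + i0) * N + 0))%N by rewrite /= addn0 addn0.
  rewrite e; move=> t.
  have -> : pC.@[yk k] = pC.@[fun j => yk k j + (i0 == j)%:R * ((0%N)%:R : C)].
    by apply: meval_eq => j; rewrite mulr0 addr0.
  by move: t; up (f7 k i0 0%N hk N0).
have fA9 l (hl : (l < N)%N) : forall t, nth 0 (E9 ++ t) (Aw l) = an l by up (fA l hl).
have fZ9 : forall t, nth 0 (E9 ++ t) Zr = 0 by up fZ.
have hsrc3 : forall k i, (k < N)%N -> (i < 1)%N -> ((fun k (_ : nat) => s4 + k * n * N)%N k i < size E9)%N.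
  move=> k i hk hi /=; rewrite sE9 /s7 /s6 /s5.
  have := lt_mix (lt_mix hk n0 : (k * n + 0 < N * n)%N) N0; lia.
have hA3 : forall l, (l < N)%N -> (Aw l < size E9)%N.
  by move=> l hl; rewrite sE9 /s7 /s6 /s5 /s4 /s3 /s2 /s1 /Aw /s0; lia.
have hZ3 : (Zr < size E9)%N by rewrite sE9 /s7 /s6 /s5 /s4 /s3 /s2 /s1 /Zr /s0; lia.
have [W'' [HW1'' [HW2'' HW3'']]] := ws_spec o (J := 1%N) hsrc3 hA3 hZ3 (fact0 fZ9).
have eW3 : W3 = ws R (size E9) 1 (fun k (_ : nat) => s4 + k * n * N)%N Aw Zr N by rewrite sE9.
rewrite eW3 HW1''; set E10 := E9 ++ W''.
have sE10 : size E10 = s8 by rewrite size_cat HW2'' sE9.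
have fD t : nth 0 (E10 ++ t) resD = \sum_(j < n) w' j * (pC^`M(j)).@[x'].
  rewrite nth_catl; last by rewrite sE10 /resD /s8; lia.
  rewrite /resD -sE9 HW3'' //.
  transitivity (\sum_(k < N) a k * pC.@[fun j => x' j + w' j * ((k : nat)%:R : C)]).
    apply: eq_bigr => k _; rewrite (fact0 (fA9 k (ltn_ord k))) /an inord_val.
    by rewrite (fact0 (f78 k (ltn_ord k))).
  by rewrite (core Ha x' w' Hdeg).

have hp0 : forall t, nth 0 (E10 ++ t) s4 = pC.@[x'].
  have -> : pC.@[x'] = pC.@[yk 0] by apply: meval_eq => j; rewrite /yk mulr0 addr0.
  have e : s4 = (s4 + 0 * n * N)%N by rewrite mul0n addn0.
  by rewrite {1}e; up (f78 0%N N0).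
have {}ok : all (okI (size E10)) F1.
  by apply: all_mkseq_ok => q hq /=; rewrite sE10 /s8 /s7 /s6 /s5; apply/andP; split; lia.
rewrite (run_block o ok); set E11 := E10 ++ _.
have sE11 : size E11 = s9 by rewrite size_cat size_map size_mkseq sE10.
have fP : forall t, nth 0 (E11 ++ t) s8 = pC.@[x'] * pC.@[x'].
  by move=> t; rewrite -[s8]addn0 -sE10 /E11 /F1 new_fact //= (fact0 hp0).
have fg (i : 'I_n) : forall t, nth 0 (E11 ++ t) (res1 i) = (pC^`M(i)).@[x'].
  have -> : (pC^`M(i)).@[x'] = (pC^`M(i)).@[yk 0] by apply: meval_eq => j; rewrite /yk mulr0 addr0.
  have e : res1 i = res1 (0 * n + i) by rewrite mul0n add0n.
  by rewrite e; up (f8 0%N i N0).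
have fD11 : forall t, nth 0 (E11 ++ t) resD = \sum_(j < n) w' j * (pC^`M(j)).@[x'] by up fD.
have {}ok : all (okI (size E11)) F2.
  apply: all_mkseq_ok => q hq /=; rewrite sE11 /s9 /s8 /resD /res1 /s7 /s6; apply/andP; split; last by lia.
  have := lt_mix (N0 : (0 < N)%N) hq; lia.
rewrite (run_block o ok); set E12 := E11 ++ _.
have sE12 : size E12 = s10 by rewrite size_cat size_map size_mkseq sE11.
have f12 (i : 'I_n) t : nth 0 (E12 ++ t) (s9 + i) =
   (pC^`M(i)).@[x'] * \sum_(j < n) w' j * (pC^`M(j)).@[x'].
  by rewrite -sE11 /E12 /F2 new_fact //= (fact0 (fg i)) (fact0 fD11).
have fP12 : forall t, nth 0 (E12 ++ t) s8 = pC.@[x'] * pC.@[x'] by up fP.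
have {}ok : all (okI (size E12)) F3.
  by apply: all_mkseq_ok => q hq /=; rewrite sE12 /s10 /s9; apply/andP; split; lia.
rewrite (run_block o ok); set E13 := E12 ++ _.
have sE13 : size E13 = s11 by rewrite size_cat size_map size_mkseq sE12.
have f13 (i : 'I_n) t : nth 0 (E13 ++ t) (s10 + i) =
   (pC^`M(i)).@[x'] * (\sum_(j < n) w' j * (pC^`M(j)).@[x']) / (pC.@[x'] * pC.@[x']).
  by rewrite -sE12 /E13 /F3 new_fact //= (fact0 (f12 i)) (fact0 fP12).
have fH13 (i : 'I_n) : forall t, nth 0 (E13 ++ t) (res2 i) = \sum_(j < n) w' j * ((pC^`M(i))^`M(j)).@[x'].
  by up (f9 i).
have hp13 : forall t, nth 0 (E13 ++ t) s4 = pC.@[x'] by up hp0.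
have {}ok : all (okI (size E13)) F4.
  apply: all_mkseq_ok => q hq /=; rewrite sE13 /s11 /s10 /s9 /s8 /res2 /s7 /=.
  apply/andP; split; [rewrite mulnS; lia|rewrite /s6 /s5; lia].
rewrite (run_block o ok); set E14 := E13 ++ _.
have sE14 : size E14 = s12 by rewrite size_cat size_map size_mkseq sE13.
have f14 (i : 'I_n) t : nth 0 (E14 ++ t) (s11 + i) =
   (\sum_(j < n) w' j * ((pC^`M(i))^`M(j)).@[x']) / pC.@[x'].
  by rewrite -sE13 /E14 /F4 new_fact //= (fact0 (fH13 i)) (fact0 hp13).
have f1314 (i : 'I_n) : forall t, nth 0 (E14 ++ t) (s10 + i) =
   (pC^`M(i)).@[x'] * (\sum_(j < n) w' j * (pC^`M(j)).@[x']) / (pC.@[x'] * pC.@[x']).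
  by up (f13 i).
have {}ok : all (okI (size E14)) F5.
  by apply: all_mkseq_ok => q hq /=; rewrite sE14 /s12 /s11 /s10; apply/andP; split; lia.
rewrite (run_block o ok) -sE14 nth_block //= (fact0 (f1314 kk)) (fact0 (f14 kk)).
have key : hess_neglog_mul p x w kk =
  (p^`M(kk)).@[x] * (\sum_(j < n) w j * (p^`M(j)).@[x]) / (p.@[x] * p.@[x]) -
  (\sum_(j < n) w j * ((p^`M(kk))^`M(j)).@[x]) / p.@[x].
  by rewrite /hess_neglog_mul /hess_neglog alg_id.
rewrite key cplx_id (sum_C w (fun j => (p^`M(j)).@[x])) (sum_C w (fun j => ((p^`M(kk))^`M(j)).@[x])).
have e1 : forall q : {mpoly R[n]}, (Defs.mpolyC q).@[x'] = real_complex R (q.@[x]).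
  by move=> q; apply: meval_mpolyC.
rewrite -!e1 -!mderiv_mpolyC.
by congr (_ * _ * _ - _ * _); apply: eq_bigr => j _; rewrite -e1 -?mderiv_mpolyC.
Qed.

End Correct.
End Prog.

Lemma cost_le (C : Type) (TO : nat) (P : program C) : (0 < TO)%N ->
  (cost TO P <= size (instrs P) * TO)%N.
Proof.
move=> hT; rewrite /cost; elim: (instrs P) => [|c s IH]; first by rewrite big_nil.
rewrite big_cons /=; have : (instr_cost TO c <= TO)%N by case: c.
lia.
Qed.


Unset Implicit Arguments.

Theorem lemmaD3 (R : rcfType) :
  exists c : nat, forall n d : nat, (0 < n)%N -> (0 < d)%N ->
  exists P : program R[i],
    (forall TO : nat, (0 < TO)%N -> (cost TO P <= c * n * d ^ 2 * TO)%N) /\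
    (forall (p : {mpoly R[n]}) (x w : 'I_n -> R),
       hyperbolic d p -> p.@[x] != 0 ->
       forall k : 'I_n, run (cevalp p) P x w k = real_complex R (hess_neglog_mul p x w k)).
Proof.
exists 100%N => n d n0 d0.
have [a Ha] := @interp R[i] d.+1 (ltn0Sn d).
exists (prog n a); split.
  move=> TO hT; apply: leq_trans (@cost_le _ TO (prog n a) hT) _.
  rewrite size_prog leq_mul2r; apply/orP; right.
  rewrite /s12 /s11 /s10 /s9 /s8 /s7 /s6 /s5 /s4 /s3 /s2 /s1 /s0.
  nia.
move=> p x w [Hh _] _ k.
exact: main_correct.
Qed.
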